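(* Assume (C1) and (C2). (i) There are positive constants $\rho$ and $\delta'$ such that $I(u)\ge\delta'$ for all $u\in\mathcal{D}$ with $\|u\|=\rho$. (ii) There is $\varphi\in\mathcal{D}\setminus\{0\}$ such that $I(t\varphi)\to-\infty$ as $t\to+\infty$.
   Context: Fix real numbers $p,q,r$ with $1<p<q$, $\frac p2$ a positive integer, and $r\ge1$, and functions $a,b,c:\mathbb{Z}\to(0,+\infty)$. Conditions: - (C1) There is $b_0>0$ with $b(n)\ge b_0$ for all $n$ and $b(n)\to+\infty$ as $|n|\to\infty$. - (C2) There is $c_0>0$ with $c(n)\le c_0$ for all $n$ and $\sum_n c(n)<+\infty$. Notation and spaces: - $\Delta u(n)=u(n+1)-u(n)$. - $E$ is the set of real sequences $u$ with $\|u\|:=\big(\sum_n[a(n)|\Delta u(n)|^p+b(n)|u(n)|^p]\big)^{1/p}<\infty$. - $\mathcal{D}=\{u\in E:\sum_n c(n)|u(n)|^q\ln|u(n)|^r<+\infty\}$, where terms with $u(n)=0$ are read as $0$. For $u\in\mathcal{D}$: $$I(u)=\frac1p\|u\|^p+\frac{r}{q^2}\sum_n c(n)|u(n)|^q-\frac1q\sum_n c(n)|u(n)|^q\ln|u(n)|^r.$$ *)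

(* Defs.v *)
From Stdlib Require Import Reals ZArith.
From Coquelicot Require Import Coquelicot.
Open Scope R_scope.

(* x^a for x >= 0 and a > 0, with the convention 0^a = 0
   (Stdlib's Rpower 0 a would give 1). *)
Definition rpow (x a : R) : R :=
  if Rle_dec x 0 then 0 else Rpower x a.

Definition absp (x a : R) : R := rpow (Rabs x) a.

(* Sums over Z, split into n >= 0 and n <= -1. *)
Definition zpos (f : Z -> R) (n : nat) : R := f (Z.of_nat n).
Definition zneg (f : Z -> R) (n : nat) : R := f (- Z.of_nat n - 1)%Z.

Definition zsummable (f : Z -> R) : Prop :=
  ex_series (fun n => Rabs (zpos f n)) /\ ex_series (fun n => Rabs (zneg f n)).

Definition zsum (f : Z -> R) : R := Series (zpos f) + Series (zneg f).

Definition Delta (u : Z -> R) (n : Z) : R := u (n + 1)%Z - u n.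

Definition Eterm (p : R) (a b u : Z -> R) (n : Z) : R :=
  a n * absp (Delta u n) p + b n * absp (u n) p.

Definition inE (p : R) (a b u : Z -> R) : Prop := zsummable (Eterm p a b u).

Definition normE (p : R) (a b u : Z -> R) : R := rpow (zsum (Eterm p a b u)) (1 / p).

(* c(n)|u(n)|^q ln |u(n)|^r, read as 0 when u(n) = 0 *)
Definition logterm (q r : R) (c u : Z -> R) (n : Z) : R :=
  if Req_EM_T (u n) 0 then 0 else c n * absp (u n) q * ln (absp (u n) r).

Definition inD (p q r : R) (a b c u : Z -> R) : Prop :=
  inE p a b u /\ zsummable (logterm q r c u).

Definition Ifun (p q r : R) (a b c u : Z -> R) : R :=
  1 / p * rpow (normE p a b u) p
  + r / (q ^ 2) * zsum (fun n => c n * absp (u n) q)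
  - 1 / q * zsum (logterm q r c u).

(* Main.v *)
Require Import Defs.
From Stdlib Require Import Reals ZArith Lra Lia FunctionalExtensionality.
From Coquelicot Require Import Coquelicot.
Open Scope R_scope.

Lemma rpow_pos x a : 0 < x -> rpow x a = Rpower x a.
Proof. intros; unfold rpow; destruct Rle_dec; [lra|auto]. Qed.
Lemma rpow_nonpos x a : x <= 0 -> rpow x a = 0.
Proof. intros; unfold rpow; destruct Rle_dec; [auto|lra]. Qed.
Lemma Rpower_gt0 x a : 0 < Rpower x a.
Proof. unfold Rpower; apply exp_pos. Qed.
Lemma rpow_ge0 x a : 0 <= rpow x a.
Proof. unfold rpow; destruct Rle_dec; [lra|left; apply Rpower_gt0]. Qed.
Lemma absp_ge0 x a : 0 <= absp x a.
Proof. apply rpow_ge0. Qed.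
Lemma absp0 a : absp 0 a = 0.
Proof. unfold absp; rewrite Rabs_R0; apply rpow_nonpos; lra. Qed.
Lemma abspt t a : 0 < t -> absp t a = Rpower t a.
Proof. intros; unfold absp; rewrite Rabs_pos_eq by lra; apply rpow_pos; auto. Qed.
Lemma abspnt t a : 0 < t -> absp (- t) a = Rpower t a.
Proof. intros; unfold absp; rewrite Rabs_Ropp, Rabs_pos_eq by lra; apply rpow_pos; auto. Qed.
Lemma Rpower_1_l a : Rpower 1 a = 1.
Proof. unfold Rpower; rewrite ln_1, Rmult_0_r; apply exp_0. Qed.

Lemma sum_n_ge0 a : (forall n, 0 <= a n) -> forall k, 0 <= sum_n a k.
Proof.
  intros H k; induction k.
  - rewrite sum_O; auto.
  - rewrite sum_Sn; change (0 <= sum_n a k + a (S k)); specialize (H (S k)); lra.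
Qed.
Lemma term_le_sum_n a : (forall n, 0 <= a n) -> forall k, a k <= sum_n a k.
Proof.
  intros H k; destruct k.
  - rewrite sum_O; lra.
  - rewrite sum_Sn; change (a (S k) <= sum_n a k + a (S k)); pose proof (sum_n_ge0 a H k); lra.
Qed.
Lemma sum_n_le_Series a : (forall n, 0 <= a n) -> ex_series a -> forall k, sum_n a k <= Series a.
Proof.
  intros H He. apply is_lim_seq_incr_compare.
  - apply Series_correct in He. exact He.
  - intros n; rewrite sum_Sn; change (sum_n a n <= sum_n a n + a (S n)); specialize (H (S n)); lra.
Qed.
Lemma Series_ge0 a : (forall n, 0 <= a n) -> ex_series a -> 0 <= Series a.
Proof. intros H He; eapply Rle_trans; [apply (sum_n_ge0 a H 0%nat)|apply sum_n_le_Series; auto]. Qed.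
Lemma term_le_Series a : (forall n, 0 <= a n) -> ex_series a -> forall k, a k <= Series a.
Proof. intros H He k; eapply Rle_trans; [apply term_le_sum_n; auto|apply sum_n_le_Series; auto]. Qed.

Lemma zsummable_ex f : zsummable f -> ex_series (zpos f) /\ ex_series (zneg f).
Proof. intros [H1 H2]; split; apply ex_series_Rabs; auto. Qed.

Lemma zsum_ge0 f : zsummable f -> (forall n, 0 <= f n) -> 0 <= zsum f.
Proof.
  intros Hs H; destruct (zsummable_ex f Hs) as [E1 E2]; unfold zsum.
  pose proof (Series_ge0 (zpos f) (fun n => H _) E1).
  pose proof (Series_ge0 (zneg f) (fun n => H _) E2). lra.
Qed.

Lemma Series_le0 a : (forall n, a n <= 0) -> ex_series a -> Series a <= 0.
Proof.
  intros H He.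
  assert (0 <= Series (fun n => - a n)).
  { apply Series_ge0. intros n; specialize (H n); lra. apply (ex_series_opp a He). }
  rewrite Series_opp in H0; lra.
Qed.

Lemma zsum_le0 f : zsummable f -> (forall n, f n <= 0) -> zsum f <= 0.
Proof.
  intros Hs H; destruct (zsummable_ex f Hs) as [E1 E2]; unfold zsum.
  pose proof (Series_le0 (zpos f) (fun n => H _) E1).
  pose proof (Series_le0 (zneg f) (fun n => H _) E2). lra.
Qed.

Lemma zsum_term f : zsummable f -> (forall n, 0 <= f n) -> forall n, f n <= zsum f.
Proof.
  intros Hs H n; destruct (zsummable_ex f Hs) as [E1 E2]; unfold zsum.
  pose proof (Series_ge0 (zpos f) (fun n => H _) E1).
  pose proof (Series_ge0 (zneg f) (fun n => H _) E2).
  destruct (Z_le_gt_dec 0 n).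
  - pose proof (term_le_Series (zpos f) (fun n => H _) E1 (Z.to_nat n)).
    unfold zpos at 1 in H2; rewrite Z2Nat.id in H2 by lia. lra.
  - pose proof (term_le_Series (zneg f) (fun n => H _) E2 (Z.to_nat (- n - 1))).
    unfold zneg at 1 in H2; rewrite Z2Nat.id in H2 by lia.
    replace (- (- n - 1) - 1)%Z with n in H2 by lia. lra.
Qed.

Lemma series_first a : (forall n, a (S n) = 0) -> is_series a (a 0%nat).
Proof.
  intros H.
  assert (Hs : forall k, sum_n a k = a 0%nat).
  { induction k. apply sum_O. rewrite sum_Sn, IHk, H. change (a 0%nat + 0 = a 0%nat). lra. }
  unfold is_series. eapply filterlim_ext. intros; symmetry; apply Hs.
  apply filterlim_const.
Qed.

Lemma zsum_two f : (forall n, n <> 0%Z -> n <> (-1)%Z -> f n = 0) ->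
  zsummable f /\ zsum f = f 0%Z + f (-1)%Z.
Proof.
  intros H.
  assert (Hp : forall k, zpos f (S k) = 0).
  { intros k; unfold zpos; apply H; lia. }
  assert (Hn : forall k, zneg f (S k) = 0).
  { intros k; unfold zneg; apply H; lia. }
  split; [split|].
  - exists (Rabs (zpos f 0%nat)). apply series_first. intros; rewrite Hp; apply Rabs_R0.
  - exists (Rabs (zneg f 0%nat)). apply series_first. intros; rewrite Hn; apply Rabs_R0.
  - unfold zsum. rewrite (is_series_unique _ _ (series_first _ Hp)).
    rewrite (is_series_unique _ _ (series_first _ Hn)). reflexivity.
Qed.

Lemma zsummable_le f g : (forall n, Rabs (g n) <= Rabs (f n)) -> zsummable f -> zsummable g.
Proof.
  intros H [H1 H2]; split.
  - eapply (@ex_series_le R_AbsRing R_CompleteNormedModule); [|exact H1]. intros n; change (Rabs (Rabs (zpos g n)) <= Rabs (zpos f n)).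
    rewrite Rabs_Rabsolu; apply H.
  - eapply (@ex_series_le R_AbsRing R_CompleteNormedModule); [|exact H2]. intros n; change (Rabs (Rabs (zneg g n)) <= Rabs (zneg f n)).
    rewrite Rabs_Rabsolu; apply H.
Qed.

Lemma part1 (p q r : R) (a b c : Z -> R)
  (hp : 1 < p) (hpq : p < q) (hr : 1 <= r)
  (ha : forall n, 0 < a n) (hb : forall n, 0 < b n) (hc : forall n, 0 < c n)
  (b0 : R) (hb0 : 0 < b0) (hbb : forall n, b0 <= b n) (Cs : zsummable c) :
  (exists rho delta', 0 < rho /\ 0 < delta' /\
     forall u, inD p q r a b c u -> normE p a b u = rho -> delta' <= Ifun p q r a b c u).
Proof.
  exists (Rpower (b0/2) (1/p)), (1/p * (b0/2)).
  split; [apply Rpower_gt0|]. split.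
  { apply Rmult_lt_0_compat; [apply Rdiv_lt_0_compat|]; lra. }
  intros u [HE HL] Hn.
  set (Z0 := zsum (Eterm p a b u)) in *.
  assert (HZ : Z0 = b0/2).
  { unfold normE in Hn; fold Z0 in Hn.
    destruct (Rle_dec Z0 0) as [h|h].
    - rewrite rpow_nonpos in Hn by auto. pose proof (Rpower_gt0 (b0/2) (1/p)); lra.
    - rewrite rpow_pos in Hn by lra.
      apply (f_equal (fun x => Rpower x p)) in Hn. rewrite !Rpower_mult in Hn.
      replace (1/p*p) with 1 in Hn by (field; lra).
      rewrite !Rpower_1 in Hn by lra. auto. }
  assert (Hnrm : rpow (normE p a b u) p = b0/2).
  { rewrite Hn, rpow_pos by apply Rpower_gt0. rewrite Rpower_mult.
    replace (1/p*p) with 1 by (field; lra). apply Rpower_1; lra. }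
  assert (HEt : forall n, 0 <= Eterm p a b u n).
  { intros n; unfold Eterm. pose proof (absp_ge0 (Defs.Delta u n) p). pose proof (absp_ge0 (u n) p).
    pose proof (ha n); pose proof (hb n); nra. }
  assert (Hsmall : forall n, Rabs (u n) < 1).
  { intros n. pose proof (zsum_term _ HE HEt n) as H1. fold Z0 in H1. rewrite HZ in H1.
    unfold Eterm in H1.
    pose proof (absp_ge0 (Defs.Delta u n) p). pose proof (absp_ge0 (u n) p).
    pose proof (ha n); pose proof (hbb n).
    assert (Hh : absp (u n) p <= 1/2) by nra.
    destruct (Rlt_le_dec (Rabs (u n)) 1) as [h|h]; auto.
    unfold absp in Hh. rewrite rpow_pos in Hh by lra.
    pose proof (Rle_Rpower (Rabs (u n)) 0 p h ltac:(lra)) as Hq. rewrite Rpower_O in Hq by lra. lra. }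
  assert (HS2 : 0 <= zsum (fun n => c n * absp (u n) q)).
  { assert (Hb1 : forall n, 0 <= absp (u n) q <= 1).
    { intros n; split; [apply absp_ge0|]. unfold absp.
      destruct (Req_dec (u n) 0) as [e|e].
      - rewrite e, Rabs_R0, rpow_nonpos; lra.
      - pose proof (Rabs_pos_lt _ e). rewrite rpow_pos by auto.
        rewrite <- (Rpower_1_l q). apply Rle_Rpower_l; [lra|]. pose proof (Hsmall n); lra. }
    apply zsum_ge0.
    - apply (zsummable_le c); auto. intros n. pose proof (hc n); pose proof (Hb1 n).
      rewrite !Rabs_pos_eq; nra.
    - intros n; pose proof (hc n); pose proof (Hb1 n); nra. }
  assert (HS3 : zsum (logterm q r c u) <= 0).
  { apply zsum_le0; auto. intros n. unfold logterm. destruct Req_EM_T as [e|e]; [lra|].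
    pose proof (Rabs_pos_lt _ e). unfold absp. rewrite !rpow_pos by auto.
    assert (ln (Rpower (Rabs (u n)) r) < 0).
    { unfold Rpower; rewrite ln_exp. pose proof (Hsmall n).
      pose proof (ln_increasing _ _ H H0). rewrite ln_1 in H1. nra. }
    pose proof (hc n). pose proof (Rpower_gt0 (Rabs (u n)) q).
    assert (0 < c n * Rpower (Rabs (u n)) q) by nra. nra. }
  unfold Ifun. rewrite Hnrm.
  assert (0 <= r / q^2 * zsum (fun n => c n * absp (u n) q)).
  { apply Rmult_le_pos; auto. apply Rdiv_le_0_compat; [lra| apply pow_lt; lra]. }
  assert (0 <= - (1/q * zsum (logterm q r c u))).
  { assert (0 < 1/q) by (apply Rdiv_lt_0_compat; lra). nra. }
  lra.
Qed.

Definition phi (n : Z) : R := if Z.eq_dec n 0 then 1 else 0.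

Lemma Et p a b t : 0 < t -> zsummable (Eterm p a b (fun n => t * phi n)) /\
  zsum (Eterm p a b (fun n => t * phi n)) = (a 0%Z + b 0%Z + a (-1)%Z) * Rpower t p.
Proof.
  intros ht. destruct (zsum_two (Eterm p a b (fun n => t * phi n))) as [H1 H2].
  - intros n h0 h1. unfold Eterm, Defs.Delta, phi.
    repeat destruct Z.eq_dec; try lia. rewrite !Rmult_0_r, Rminus_0_r, absp0. ring.
  - split; auto. rewrite H2. unfold Eterm, Defs.Delta, phi.
    repeat destruct Z.eq_dec; try lia.
    replace (t * 0 - t * 1) with (- t) by ring. replace (t*1 - t*0) with t by ring.
    rewrite Rmult_1_r, Rmult_0_r, (abspt t p ht), (abspnt t p ht), absp0. ring.
Qed.

Lemma Ct q c t : 0 < t -> zsummable (fun n => c n * absp (t * phi n) q) /\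
  zsum (fun n => c n * absp (t * phi n) q) = c 0%Z * Rpower t q.
Proof.
  intros ht. destruct (zsum_two (fun n => c n * absp (t * phi n) q)) as [H1 H2].
  - intros n h0 h1. unfold phi.
    repeat destruct Z.eq_dec; try lia. rewrite !Rmult_0_r, absp0. ring.
  - split; auto. rewrite H2. unfold phi.
    repeat destruct Z.eq_dec; try lia.
    rewrite Rmult_1_r, Rmult_0_r, abspt, absp0 by auto. ring.
Qed.

Lemma Lt q r c t : 0 < t -> zsummable (logterm q r c (fun n => t * phi n)) /\
  zsum (logterm q r c (fun n => t * phi n)) = c 0%Z * Rpower t q * (r * ln t).
Proof.
  intros ht. destruct (zsum_two (logterm q r c (fun n => t * phi n))) as [H1 H2].
  - intros n h0 h1. unfold logterm, phi.
    destruct Req_EM_T as [e|e]; auto. destruct Z.eq_dec; try lia. lra.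
  - split; auto. rewrite H2. unfold logterm, phi.
    destruct Req_EM_T as [e|e]; destruct Z.eq_dec; try lia; try lra.
    destruct Req_EM_T as [e'|e']; destruct Z.eq_dec; try lia; try lra.
    rewrite Rmult_1_r, !abspt by auto. unfold Rpower at 2. rewrite ln_exp. ring.
Qed.

Lemma part2 (p q r : R) (a b c : Z -> R)
  (hp : 1 < p) (hpq : p < q) (hr : 1 <= r)
  (ha : forall n, 0 < a n) (hb : forall n, 0 < b n) (hc : forall n, 0 < c n) :
  (exists phi : Z -> R, inD p q r a b c phi /\ (exists n, phi n <> 0) /\
     (forall t, 0 < t -> inD p q r a b c (fun n => t * phi n)) /\
     is_lim (fun t => Ifun p q r a b c (fun n => t * phi n)) p_infty m_infty).
Proof.
  assert (HD : forall t, 0 < t -> inD p q r a b c (fun n => t * phi n)).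
  { intros t ht; split; [apply (Et p a b t ht)|apply (Lt q r c t ht)]. }
  set (A := a 0%Z + b 0%Z + a (-1)%Z).
  assert (hA : 0 < A) by (unfold A; pose proof (ha 0%Z); pose proof (hb 0%Z); pose proof (ha (-1)%Z); lra).
  set (c0 := c 0%Z). assert (hc0 : 0 < c0) by apply hc.
  assert (HI : forall t, 0 < t -> Ifun p q r a b c (fun n => t * phi n) =
     A * Rpower t p / p + r / q^2 * (c0 * Rpower t q) - 1/q * (c0 * Rpower t q * (r * ln t))).
  { intros t ht. unfold Ifun. rewrite (proj2 (Ct q c t ht)), (proj2 (Lt q r c t ht)).
    unfold normE. rewrite (proj2 (Et p a b t ht)). fold A.
    assert (0 < A * Rpower t p) by (pose proof (Rpower_gt0 t p); nra).
    rewrite (rpow_pos _ (1/p)) by auto. rewrite rpow_pos by apply Rpower_gt0.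
    rewrite Rpower_mult. replace (1/p*p) with 1 by (field; lra). rewrite Rpower_1 by auto.
    fold c0. field. split; lra. }
  exists phi. split; [|split; [|split]].
  - replace phi with (fun n => 1 * phi n). apply HD; lra.
    apply FunctionalExtensionality.functional_extensionality; intros; ring.
  - exists 0%Z. unfold phi; destruct Z.eq_dec; [lra|lia].
  - exact HD.
  - apply is_lim_spec. intros M.
    set (K := A / p + r * c0 / q^2).
    assert (hq2 : 0 < q^2) by (apply pow_lt; lra).
    set (T := (K + 1) * q / (r * c0)).
    exists (Rmax (Rmax 1 (exp T)) (- M)). intros t Ht.
    pose proof (Rmax_l (Rmax 1 (exp T)) (-M)). pose proof (Rmax_r (Rmax 1 (exp T)) (-M)).
    pose proof (Rmax_l 1 (exp T)). pose proof (Rmax_r 1 (exp T)).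
    assert (ht1 : 1 < t) by lra.
    assert (hlt : T < ln t).
    { rewrite <- (ln_exp T). apply ln_increasing. apply exp_pos. lra. }
    rewrite HI by lra.
    set (Y := Rpower t q). set (P := Rpower t p).
    assert (hPY : P <= Y) by (apply Rle_Rpower; lra).
    assert (hYt : t <= Y).
    { unfold Y. rewrite <- (Rpower_1 t) at 1 by lra. apply Rle_Rpower; lra. }
    assert (hL : K + 1 <= r * c0 / q * ln t).
    { unfold T in hlt. apply Rmult_lt_compat_l with (r := r * c0 / q) in hlt.
      replace (r * c0 / q * ((K + 1) * q / (r * c0))) with (K + 1) in hlt by (field; split; lra).
      lra. apply Rdiv_lt_0_compat; nra. }
    assert (E : A * P / p + r / q ^ 2 * (c0 * Y) - 1 / q * (c0 * Y * (r * ln t))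
               = A / p * P + Y * (r * c0 / q^2) - Y * (r * c0 / q * ln t)) by (field; lra).
    rewrite E.
    assert (A / p * P <= A / p * Y) by (apply Rmult_le_compat_l; [left; apply Rdiv_lt_0_compat|]; lra).
    assert (Y * (K + 1) <= Y * (r * c0 / q * ln t)) by (apply Rmult_le_compat_l; lra).
    unfold K in *. nra.
Qed.

Theorem lemma4p3 (p q r : R) (a b c : Z -> R)
  (hp : 1 < p) (hpq : p < q) (hp2 : exists k : nat, (0 < k)%nat /\ p = 2 * INR k)
  (hr : 1 <= r)
  (ha : forall n, 0 < a n) (hb : forall n, 0 < b n) (hc : forall n, 0 < c n)
  (C1 : (exists b0, 0 < b0 /\ forall n, b0 <= b n) /\
        (forall M, exists N, forall n, (N < Z.abs n)%Z -> M <= b n))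
  (C2 : (exists c0, 0 < c0 /\ forall n, c n <= c0) /\ zsummable c) :
  (exists rho delta', 0 < rho /\ 0 < delta' /\
     forall u, inD p q r a b c u -> normE p a b u = rho -> delta' <= Ifun p q r a b c u)
  /\
  (exists phi : Z -> R, inD p q r a b c phi /\ (exists n, phi n <> 0) /\
     (forall t, 0 < t -> inD p q r a b c (fun n => t * phi n)) /\
     is_lim (fun t => Ifun p q r a b c (fun n => t * phi n)) p_infty m_infty).
Proof.
  destruct C1 as [[b0 [hb0 hbb]] _]. destruct C2 as [_ Cs].
  split.
  - exact (part1 p q r a b c hp hpq hr ha hb hc b0 hb0 hbb Cs).
  - exact (part2 p q r a b c hp hpq hr ha hb hc).
Qed.
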